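(* In the virtually-$\mathbb{Z}$ setting described in the context, let $\Phi$ be a cellular automaton on $A^G$ with neighborhood $S$ and $\Delta=\max\{\mathrm{imp}(s):s\in S\}$. Let $x\in A^G$ be such that for every $k\in\mathbb{N}$ there exist finite sets $L_1\subseteq Br_-(V_{\{-k\}})$, $L_2\subseteq Br_+(V_{\{k\}})$ and sections $V_1\subseteq Br_-(V_{\{-k\}})$, $V_2\subseteq Br_+(V_{\{k\}})$ with $l(V_1)>\Delta$ and $l(V_2)>\Delta$, such that for $i=1,2$ the pattern $u_i=x|_{L_i}$ is $V_i$-blocking for $\Phi$. Then $x$ is an equicontinuity point of $\Phi$.
   Context: $G$ is a finitely generated group, $A$ a finite alphabet, $H\leq G$ a subgroup of finite index and $\varphi:H\to\mathbb{Z}$ a group isomorphism. $F\subseteq G$ is a finite set with $1_G\in F$ containing exactly one element of each right coset $Hg$, so every $g\in G$ decomposes uniquely as $g=zf$ with $z\in H$, $f\in F$. Define $p:G\to\mathbb{Z}$ by $p(zf)=\varphi(z)$. For $X\subseteq\mathbb{Z}$, $V_X=p^{-1}(X)$; $V_{\{k\}}$ is the $k$-th vertebra; $V_X$ is a section if $X=[a,b]$ is a finite integer interval, with length $l(V_{[a,b]})=b-a+1$, right arm $Br_+(V_{[a,b]})=V_{(b,\infty)}$ and left arm $Br_-(V_{[a,b]})=V_{(-\infty,a)}$ (so $Br_-(V_{\{-k\}})=V_{(-\infty,-k)}$, $Br_+(V_{\{k\}})=V_{(k,\infty)}$). For $s\in G$, $\mathrm{imp}(s)=\max\{|p(gs)-p(g)|:g\in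 V_{\{k\}}\}$, which is independent of $k$. A cellular automaton $\Phi$ with neighborhood $S\subseteq G$ finite and local map $\mu:A^S\to A$ is $\Phi(x)(g)=\mu(s\mapsto x(gs))$. For finite $V\subseteq G$, a pattern $u\in A^L$ ($L\subseteq G$ finite) is $V$-blocking for $\Phi$ if for all $x,y\in A^G$ with $x|_L=y|_L=u$ one has $\Phi^t(x)|_V=\Phi^t(y)|_V$ for all $t\in\mathbb{N}$. Metric: $G$ is given the generating set $F\cup\{\varphi^{-1}(1)\}$ together with inverses, with word metric $d$, and $A^G$ the Cantor metric $d^C(x,y)=2^{-k}$, $k=\min\{d(1_G,g):x(g)\neq y(g)\}$, with closed balls $B$. $x$ is an equicontinuity point of $\Phi$ if $\forall\epsilon>0\,\exists\delta>0\,\forall t\in\mathbb{N}$, $\Phi^t(B(x,\delta))\subseteq B(\Phi^t(x),\epsilon)$. *)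

(* Defs.v *)
From Stdlib Require Import ZArith Reals List.
Import ListNotations.

Set Implicit Arguments.

Inductive word_le {G : Type} (gen : G -> Prop) (mul : G -> G -> G) (one : G)
  : nat -> G -> Prop :=
| word_le_one : forall n, word_le gen mul one n one
| word_le_step : forall n g s, word_le gen mul one n g -> gen s ->
    word_le gen mul one (S n) (mul g s).

Definition finitely_generated {G : Type} (mul : G -> G -> G) (inv : G -> G)
  (one : G) : Prop :=
  exists gens : list G, forall g, exists n,
    word_le (fun s => In s gens \/ In (inv s) gens) mul one n g.

Definition std_gen {G : Type} (inv : G -> G) (H : G -> Prop) (phi : G -> Z)
  (F : list G) (s : G) : Prop :=
  In s F \/ (H s /\ phi s = 1%Z) \/ In (inv s) F \/ (H (inv s) /\ phi (inv s) = 1%Z).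

Definition word_length {G : Type} (mul : G -> G -> G) (inv : G -> G) (one : G)
  (H : G -> Prop) (phi : G -> Z) (F : list G) (g : G) (n : nat) : Prop :=
  word_le (std_gen inv H phi F) mul one n g /\
  forall m, word_le (std_gen inv H phi F) mul one m g -> (n <= m)%nat.

Definition cantor_dist {G A : Type} (mul : G -> G -> G) (inv : G -> G) (one : G)
  (H : G -> Prop) (phi : G -> Z) (F : list G) (x y : G -> A) (r : R) : Prop :=
  ((forall g, x g = y g) /\ r = 0%R) \/
  (exists k : nat,
     (exists g, x g <> y g /\ word_length mul inv one H phi F g k) /\
     (forall g m, x g <> y g -> word_length mul inv one H phi F g m -> (k <= m)%nat) /\
     r = (/ (2 ^ k))%R).

Definition in_ball {G A : Type} (mul : G -> G -> G) (inv : G -> G) (one : G)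
  (H : G -> Prop) (phi : G -> Z) (F : list G) (x : G -> A) (delta : R) (y : G -> A)
  : Prop :=
  exists r, cantor_dist mul inv one H phi F x y r /\ (r <= delta)%R.

Definition CA {G A : Type} (mul : G -> G -> G) (S : list G) (mu : list A -> A)
  (x : G -> A) : G -> A :=
  fun g => mu (map (fun s => x (mul g s)) S).

Definition equicontinuity_point {G A : Type} (mul : G -> G -> G) (inv : G -> G)
  (one : G) (H : G -> Prop) (phi : G -> Z) (F : list G)
  (Phi : (G -> A) -> (G -> A)) (x : G -> A) : Prop :=
  forall eps : R, (0 < eps)%R -> exists delta : R, (0 < delta)%R /\
    forall (t : nat) (y : G -> A),
      in_ball mul inv one H phi F x delta y ->
      in_ball mul inv one H phi F (Nat.iter t Phi x) eps (Nat.iter t Phi y).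

Definition blocking {G A : Type} (Phi : (G -> A) -> (G -> A)) (L : G -> Prop)
  (x : G -> A) (V : G -> Prop) : Prop :=
  forall y z : G -> A,
    (forall g, L g -> y g = x g) -> (forall g, L g -> z g = x g) ->
    forall (t : nat) g, V g -> Nat.iter t Phi y g = Nat.iter t Phi z g.

(* imp(s) = max { |p(g s) - p(g)| : g in V_{0} }, and V_{0} = F. *)
Definition imp {G : Type} (mul : G -> G -> G) (F : list G) (p : G -> Z) (s : G) : Z :=
  fold_right Z.max 0%Z (map (fun f => Z.abs (p (mul f s) - p f)) F).

Definition max_imp {G : Type} (mul : G -> G -> G) (F : list G) (p : G -> Z)
  (S : list G) : Z :=
  fold_right Z.max 0%Z (map (imp mul F p) S).

(* Main.v *)
Require Import Defs.
From Stdlib Require Import ZArith Reals List.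
From Stdlib Require Import Lia Lra Classical.
Open Scope Z_scope.
Lemma classic_min (P : nat -> Prop) : (exists n, P n) -> exists n, P n /\ forall m, P m -> (n <= m)%nat.
Proof.
  intros [n Hn]. revert Hn. induction n as [n IH] using (well_founded_induction lt_wf).
  intros Hn. destruct (classic (exists m, (m < n)%nat /\ P m)) as [[m [Hm Pm]]|Hno].
  - exact (IH m Hm Pm).
  - exists n. split; auto. intros m Pm. destruct (Nat.lt_ge_cases m n); auto.
    exfalso; apply Hno; eauto.
Qed.
Lemma fold_max_ge (l : list Z) a : In a l -> a <= fold_right Z.max 0 l.
Proof. induction l; simpl. tauto. intros [->|Hi]. lia. specialize (IHl Hi); lia. Qed.
Lemma fold_max_nonneg (l : list Z) : 0 <= fold_right Z.max 0 l.
Proof. induction l; simpl; lia. Qed.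
Lemma list_bound {T} (f : T -> Z) (l : list T) : exists C, 0 <= C /\ forall q, In q l -> Z.abs (f q) <= C.
Proof. induction l as [|a l [C [HC HCl]]]. exists 0; simpl; split; [lia|tauto].
  exists (Z.max C (Z.abs (f a))). split; [lia|]. intros q [->|Hq]; [lia|]. specialize (HCl q Hq); lia. Qed.
Lemma list_nat_bound {T} (P : nat -> T -> Prop) (l : list T) :
  (forall q, In q l -> exists n, P n q) -> (forall n m q, (n <= m)%nat -> P n q -> P m q) ->
  exists N, forall q, In q l -> P N q.
Proof. intros Hl Hm. induction l as [|a l IH]. exists 0%nat; simpl; tauto.
  destruct IH as [N HN]. intros; apply Hl; simpl; auto. destruct (Hl a) as [na Hna]; simpl; auto.
  exists (Nat.max N na). intros q [->|Hq]. apply (Hm na); auto; lia. apply (Hm N); auto; lia. Qed.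
Lemma pow2_ge (n : nat) : (INR n <= 2 ^ n)%R.
Proof. induction n. simpl; lra. rewrite S_INR. simpl. assert (1 <= 2^n)%R by (apply pow_R1_Rle; lra). lra. Qed.
Lemma inv_pow_small (eps : R) : (0 < eps)%R -> exists m : nat, (/ 2 ^ m <= eps)%R.
Proof. intros He. destruct (archimed (/eps)) as [Ha _].
  assert (0 <= IZR (up (/eps)))%R. { assert (0 < /eps)%R by (apply Rinv_0_lt_compat; auto). set (u := (/eps)%R) in *. lra. }
  pose proof (pow2_ge (Z.to_nat (up (/eps)))) as H0. rewrite INR_IZR_INZ, Z2Nat.id in H0 by (apply le_IZR; auto).
  set (m := Z.to_nat (up (/eps))) in *. exists m. rewrite <- (Rinv_inv eps). apply Rinv_le_contravar.
  apply Rinv_0_lt_compat; auto. set (u := (/eps)%R) in *. lra.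
Qed.
Lemma inv_pow_mono (n m : nat) : (n <= m)%nat -> (/ 2 ^ m <= / 2 ^ n)%R.
Proof. intros. apply Rinv_le_contravar. apply pow_lt; lra. apply Rle_pow; lra||auto. Qed.
Lemma inv_pow_lt (n m : nat) : (n < m)%nat -> (/ 2 ^ m < / 2 ^ n)%R.
Proof. intros. apply Rinv_lt_contravar. apply Rmult_lt_0_compat; apply pow_lt; lra. apply Rlt_pow; lra||auto. Qed.
Theorem lemma5
  (G : Type) (mul : G -> G -> G) (inv : G -> G) (one : G)
  (Hassoc : forall a b c, mul a (mul b c) = mul (mul a b) c)
  (Hid : forall g, mul one g = g)
  (Hinv : forall g, mul (inv g) g = one)
  (Hfg : finitely_generated mul inv one)
  (H : G -> Prop) (H_one : H one)
  (H_mul : forall a b, H a -> H b -> H (mul a b))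
  (H_inv : forall a, H a -> H (inv a))
  (phi : G -> Z)
  (phi_hom : forall a b, H a -> H b -> phi (mul a b) = (phi a + phi b)%Z)
  (phi_inj : forall a b, H a -> H b -> phi a = phi b -> a = b)
  (phi_surj : forall n : Z, exists z, H z /\ phi z = n)
  (F : list G) (F_one : In one F)
  (F_transversal : forall g, exists! f, In f F /\ H (mul g (inv f)))
  (p : G -> Z)
  (p_def : forall z f, H z -> In f F -> p (mul z f) = phi z)
  (A : Type) (enumA : list A) (A_finite : forall a : A, In a enumA)
  (S : list G) (mu : list A -> A)
  (x : G -> A)
  (Hx : forall k : nat, exists (L1 L2 : list G) (a1 b1 a2 b2 : Z),
     (forall g, In g L1 -> (p g < - Z.of_nat k)%Z) /\
     (forall g, In g L2 -> (Z.of_nat k < p g)%Z) /\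
     (forall g, (a1 <= p g <= b1)%Z -> (p g < - Z.of_nat k)%Z) /\
     (forall g, (a2 <= p g <= b2)%Z -> (Z.of_nat k < p g)%Z) /\
     (b1 - a1 + 1 > max_imp mul F p S)%Z /\
     (b2 - a2 + 1 > max_imp mul F p S)%Z /\
     blocking (CA mul S mu) (fun g => In g L1) x (fun g => (a1 <= p g <= b1)%Z) /\
     blocking (CA mul S mu) (fun g => In g L2) x (fun g => (a2 <= p g <= b2)%Z)) :
  equicontinuity_point mul inv one H phi F (CA mul S mu) x.
Proof.
  assert (Hrinv : forall g, mul g (inv g) = one).
  { intro g. set (h := inv g).
    rewrite <- (Hid (mul g h)). rewrite <- (Hinv h) at 1.
    rewrite <- Hassoc. rewrite (Hassoc h g h). unfold h at 2. rewrite Hinv, Hid. apply Hinv. }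
  assert (Hrid : forall g, mul g one = g).
  { intro g. rewrite <- (Hinv g), Hassoc, Hrinv. apply Hid. }
  assert (Hinvinv : forall g, inv (inv g) = g).
  { intro g. rewrite <- (Hrid (inv (inv g))), <- (Hinv g), Hassoc, Hinv. apply Hid. }
  assert (phi_one : phi one = 0).
  { pose proof (phi_hom one one H_one H_one) as E. rewrite Hid in E. lia. }
  assert (Hdec : forall g, exists z f, H z /\ In f F /\ g = mul z f).
  { intro g. destruct (F_transversal g) as [f [[Hf Hz] _]]. exists (mul g (inv f)), f.
    repeat split; auto. rewrite <- Hassoc, Hinv, Hrid. reflexivity. }
  assert (pF : forall f, In f F -> p f = 0).
  { intros f Hf. rewrite <- (Hid f) at 1. rewrite p_def; auto. }
  assert (pH : forall z, H z -> p z = phi z).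
  { intros z Hz. rewrite <- (Hrid z) at 1. rewrite p_def; auto. }
  assert (pshift : forall g s, exists f, In f F /\ p (mul g s) = p g + p (mul f s)).
  { intros g s. destruct (Hdec g) as [z [f [Hz [Hf ->]]]].
    destruct (Hdec (mul f s)) as [z' [f' [Hz' [Hf' E]]]].
    exists f. split; auto. rewrite <- Hassoc, E, Hassoc, !p_def; auto. }
  destruct (phi_surj 1) as [h1 [Hh1 phih1]].
  assert (phiinvh1 : phi (inv h1) = -1).
  { pose proof (phi_hom (inv h1) h1 (H_inv _ Hh1) Hh1) as E. rewrite Hinv in E. lia. }
  set (gen := std_gen inv H phi F).
  set (WL := word_le gen mul one).
  assert (WLmono1 : forall n g, WL n g -> WL (Datatypes.S n) g).
  { intros n g W. induction W. constructor. constructor; auto. }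
  assert (WLmono : forall n m g, (n <= m)%nat -> WL n g -> WL m g).
  { intros n m g Hnm W. induction Hnm; auto. }
  assert (WLH : forall n : nat, forall z, H z -> (phi z = Z.of_nat n \/ phi z = - Z.of_nat n) -> WL n z).
  { induction n as [|n IH]; intros z Hz Ez.
    - replace z with one. constructor. apply phi_inj; auto. lia.
    - destruct Ez as [Ez|Ez].
      + replace z with (mul (mul z (inv h1)) h1).
        constructor. apply IH. auto. left. rewrite phi_hom; auto. lia.
        unfold gen, std_gen. right; left; auto.
        rewrite <- Hassoc, Hinv, Hrid. reflexivity.
      + replace z with (mul (mul z h1) (inv h1)).
        constructor. apply IH. auto. right. rewrite phi_hom; auto. lia.
        unfold gen, std_gen. right; right; right. rewrite Hinvinv. auto.
        rewrite <- Hassoc, Hrinv, Hrid. reflexivity. }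
  assert (WLall : forall g, WL (Datatypes.S (Z.abs_nat (p g))) g).
  { intro g. destruct (Hdec g) as [z [f [Hz [Hf ->]]]].
    constructor. apply WLH; auto. rewrite p_def; auto. lia.
    unfold gen, std_gen; left; auto. }
  set (gl := F ++ map inv F ++ (h1 :: inv h1 :: nil)).
  assert (Hgl : forall s, gen s -> In s gl).
  { intros s Hs. unfold gen, std_gen in Hs. unfold gl. rewrite !in_app_iff. simpl.
    destruct Hs as [Hs|[[Hs Es]|[Hs|[Hs Es]]]].
    - auto.
    - right; right; left. apply phi_inj; auto; lia.
    - right; left. rewrite <- (Hinvinv s). apply in_map; auto.
    - right; right; right; left. rewrite <- (Hinvinv s). f_equal. apply phi_inj; auto; lia. }
  destruct (list_bound p (flat_map (fun f => map (mul f) gl) F)) as [C [HC0 HC]].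
  assert (WLbound : forall n g, WL n g -> Z.abs (p g) <= Z.of_nat n * C).
  { intros n g W. induction W as [n|n g s W IH Hs].
    - rewrite pH; auto. rewrite phi_one. simpl. lia.
    - destruct (pshift g s) as [f [Hf E]]. rewrite E.
      assert (Z.abs (p (mul f s)) <= C). { apply HC. apply in_flat_map. exists f; split; auto.
        apply in_map; auto. }
      lia. }
  set (D := max_imp mul F p S).
  assert (Himp : forall g s, In s S -> Z.abs (p (mul g s) - p g) <= D).
  { intros g s Hs. destruct (pshift g s) as [f [Hf E]]. rewrite E.
    assert (Z.abs (p (mul f s) - p f) <= imp mul F p s).
    { apply fold_max_ge. apply (in_map (fun f => Z.abs (p (mul f s) - p f))); auto. }
    assert (imp mul F p s <= D). { apply fold_max_ge. apply in_map; auto. }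
    rewrite (pF f Hf) in H0. lia. }
  assert (D0 : 0 <= D) by apply fold_max_nonneg.
  assert (WLen : forall g, exists n, word_length mul inv one H phi F g n).
  { intro g. destruct (classic_min (fun n => WL n g)) as [n [Hn Hmin]]. eauto.
    exists n. split; auto. }
  intros eps Heps.
  destruct (inv_pow_small eps Heps) as [m Hm].
  set (k := Z.to_nat (Z.of_nat m * C)).
  destruct (Hx k) as (L1 & L2 & a1 & b1 & a2 & b2 & HL1 & HL2 & HV1 & HV2 & Hl1 & Hl2 & Hb1 & Hb2).
  fold D in Hl1, Hl2.
  assert (Eb1 : b1 < - Z.of_nat k).
  { destruct (phi_surj b1) as [z [Hz Ez]]. rewrite <- Ez, <- (pH z Hz). apply HV1. rewrite pH; auto; lia. }
  assert (Ea2 : Z.of_nat k < a2).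
  { destruct (phi_surj a2) as [z [Hz Ez]]. rewrite <- Ez, <- (pH z Hz). apply HV2. rewrite pH; auto; lia. }
  set (Reg := fun g => In g L1 \/ In g L2 \/ a1 <= p g <= b2).
  assert (RegW : exists N, forall g, Reg g -> WL N g).
  { destruct (list_nat_bound WL L1) as [N1 HN1]; eauto.
    destruct (list_nat_bound WL L2) as [N2 HN2]; eauto.
    set (N3 := Datatypes.S (Z.abs_nat a1 + Z.abs_nat b2)).
    exists (Nat.max N1 (Nat.max N2 N3)). intros g [Hg|[Hg|Hg]].
    - apply (WLmono N1); auto; lia.
    - apply (WLmono N2); auto; lia.
    - apply (WLmono (Datatypes.S (Z.abs_nat (p g)))); auto. unfold N3; lia. }
  destruct RegW as [N HN].
  exists (/ 2 ^ (Datatypes.S N))%R. split. apply Rinv_0_lt_compat, pow_lt; lra.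
  intros t y Hy.
  assert (Agree : forall g, Reg g -> y g = x g).
  { intros g Rg. destruct (classic (y g = x g)) as [|Hne]; auto. exfalso.
    destruct Hy as [r [[[Hall _]|(k' & _ & Hmin & ->)] Hr]].
    - apply Hne; symmetry; auto.
    - destruct (classic_min (fun n => WL n g)) as [n [Hn Hnmin]]. eauto.
      assert (k' <= n)%nat. { apply (Hmin g); auto. split; auto. }
      assert (n <= N)%nat by auto.
      pose proof (inv_pow_lt k' (Datatypes.S N) ltac:(lia)). lra. }
  assert (Inv : forall t g, a1 <= p g <= b2 -> Nat.iter t (CA mul S mu) y g = Nat.iter t (CA mul S mu) x g).
  { induction t0 as [|t0 IH]; intros g Hg.
    - simpl. apply Agree. right; right; auto.
    - destruct (Z_le_gt_dec (p g) b1).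
      { apply Hb1; [intros; apply Agree; left; auto|reflexivity|lia]. }
      destruct (Z_le_gt_dec a2 (p g)).
      { apply Hb2; [intros; apply Agree; right; left; auto|reflexivity|lia]. }
      simpl. unfold CA at 1 3. f_equal. apply map_ext_in. intros s Hs.
      apply IH. pose proof (Himp g s Hs). lia. }
  set (X := Nat.iter t (CA mul S mu) x). set (Y := Nat.iter t (CA mul S mu) y).
  destruct (classic (forall g, X g = Y g)) as [Hall|Hne].
  { exists 0%R. split. left; auto. lra. }
  apply not_all_ex_not in Hne. destruct Hne as [g0 Hg0].
  destruct (classic_min (fun n => exists g, X g <> Y g /\ word_length mul inv one H phi F g n))
    as [n0 [[g [Hg Hlen]] Hmin]].
  { destruct (WLen g0) as [n Hn]. eauto. }
  exists (/ 2 ^ n0)%R. split.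
  - right. exists n0. split. eauto. split; auto. intros g' m' H1 H2. apply Hmin; eauto.
  - apply Rle_trans with (/ 2 ^ m)%R; auto. apply inv_pow_mono.
    destruct (Nat.lt_ge_cases n0 m) as [Hlt|]; auto. exfalso. apply Hg.
    destruct Hlen as [Wg _].
    pose proof (WLbound m g (WLmono n0 m g (Nat.lt_le_incl _ _ Hlt) Wg)).
    symmetry. apply Inv. lia.
Qed.
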